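(* Let $G=(V,E)$ be a finite graph, $f:V\to[0,r]$, and $C$ any vertex cover of (the underlying undirected graph of) $B_{0,f}$. Define $g_C(u)=f(u)$ for $u\in V\setminus C$ and $g_C(u)=\max\bigl(0,\max_{v\in V\setminus C}(f(v)-\mathrm{dist}_G(u,v))\bigr)$ for $u\in C$, where a maximum over an empty set is $0$. Then $g_C$ is Lipschitz.
   Context: $\mathrm{dist}_G$ is the shortest-path distance (taken to be $+\infty$ between different connected components, with $f(v)-\infty=-\infty$). $g$ is Lipschitz if $|g(x)-g(y)|\le\mathrm{dist}_G(x,y)$ for all $x,y$. $VS_f(x,y)=|f(x)-f(y)|-\mathrm{dist}_G(x,y)$ if positive, else $0$; $B_{0,f}$ is the directed graph on $V$ with edges $\{(x,y):VS_f(x,y)>0,\ f(x)<f(y)\}$. *)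

(* Defs.v *)
From HB Require Import structures.
From mathcomp Require Import all_boot all_order all_algebra.
Set Implicit Arguments. Unset Strict Implicit. Unset Printing Implicit Defensive.
Import Order.TTheory GRing.Theory Num.Theory.
Local Open Scope ring_scope.

Section Defs.
Variable V : finType.
Variable e : rel V.

Definition walkn (n : nat) (x y : V) : bool :=
  [exists p : n.-tuple V, path e x p && (last x p == y)].

(* shortest-path distance; None encodes +oo (different components).
   A shortest walk, if any, has length < #|V|. *)
Definition gdist (x y : V) : option nat :=
  let k := find (fun n => walkn n x y) (iota 0 #|V|) in
  if (k < #|V|)%N then Some k else None.

Variable R : realFieldType.

Definition lipschitz (g : V -> R) : Prop :=
  forall x y, match gdist x y with
              | Some d => (`|g x - g y| <= d%:R) : Prop
              | None => True
              end.

(* VS_f(x,y) > 0, i.e. |f x - f y| - dist(x,y) > 0 (false if dist = +oo) *)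
Definition VS_pos (f : V -> R) (x y : V) : bool :=
  match gdist x y with
  | Some d => d%:R < `|f x - f y|
  | None => false
  end.

Definition B0 (f : V -> R) (x y : V) : bool := VS_pos f x y && (f x < f y).

Definition vertex_cover_B0 (f : V -> R) (C : {set V}) : Prop :=
  forall x y, B0 f x y -> (x \in C) || (y \in C).

(* g_C; for u in C: max(0, max_{v notin C} (f v - dist(u,v))), terms with
   dist = +oo are -oo and are replaced by 0, which does not change the max. *)
Definition gC (f : V -> R) (C : {set V}) (u : V) : R :=
  if u \in C then
    \big[Num.max/0]_(v | v \notin C)
      match gdist u v with Some d => f v - d%:R | None => 0 end
  else f u.
End Defs.

(* Main.v *)
Require Import Defs.

From mathcomp Require Import all_boot all_order all_algebra.
Import Order.TTheory GRing.Theory Num.Theory.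
Set Implicit Arguments. Unset Strict Implicit. Unset Printing Implicit Defensive.

Section G.
Variable V : finType.
Variable e : rel V.
Hypothesis He_sym : symmetric e.

Lemma walkP n x y : reflect (exists p : seq V, [/\ size p = n, path e x p & last x p = y]) (walkn e n x y).
Proof.
apply: (iffP existsP) => [[p /andP[Hp /eqP Hl]]|[p [Hs Hp Hl]]].
  by exists (val p); rewrite size_tuple.
have Hs' : size p == n by rewrite Hs.
by exists (Tuple Hs'); rewrite /= Hp Hl eqxx.
Qed.

Lemma walk_cat a b x y z : walkn e a x y -> walkn e b y z -> walkn e (a + b) x z.
Proof.
move=> /walkP[p [Hs Hp Hl]] /walkP[q [Hs' Hq Hl']].
apply/walkP; exists (p ++ q); by rewrite size_cat cat_path last_cat Hl Hs Hs' Hp Hq.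
Qed.

Lemma walk_sym n x y : walkn e n x y -> walkn e n y x.
Proof.
move=> /walkP[p [Hs Hp Hl]]; apply/walkP; exists (rev (belast x p)).
split; first by rewrite size_rev size_belast.
  rewrite -Hl rev_path; apply: sub_path Hp => u v; by rewrite He_sym.
rewrite -Hl; case: p {Hs Hp Hl} => [|z q] //=.
by rewrite rev_cons last_rcons.
Qed.

Lemma walk_short n x y : walkn e n x y -> exists2 m, m < #|V| & walkn e m x y.
Proof.
move=> /walkP[p [_ Hp Hl]].
case: (shortenP Hp) Hl => p' Hp' Hu _ Hl.
exists (size p'); last by apply/walkP; exists p'.
have := max_card (mem (x :: p')).
by rewrite (card_uniqP Hu).
Qed.

Lemma gdist_walk x y k : gdist e x y = Some k -> walkn e k x y.
Proof.
rewrite /gdist; set s := iota 0 #|V|.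
case: ifP => // Hk [<-].
have Hh : has (fun n => walkn e n x y) s by rewrite has_find size_iota.
have := nth_find 0 Hh; by rewrite nth_iota.
Qed.

Lemma walk_gdist n x y : walkn e n x y -> exists2 k, gdist e x y = Some k & k <= n.
Proof.
move=> Hw; rewrite /gdist; set s := iota 0 #|V|.
have [m Hm Hwm] := walk_short Hw.
have Hh : has (fun n => walkn e n x y) s.
  by apply/hasP; exists m => //; rewrite mem_iota.
have Hf := Hh; rewrite has_find size_iota in Hf.
rewrite Hf; exists (find (fun n => walkn e n x y) s) => //.
case: (leqP n.+1 #|V|) => Hn.
  rewrite leqNgt; apply/negP => Hlt.
  have := before_find 0 Hlt; rewrite nth_iota; first by rewrite add0n Hw.
  exact: ltn_trans Hlt Hf.
by apply: ltnW; apply: leq_trans Hf _.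
Qed.

Lemma gdist_sym x y : gdist e x y = gdist e y x.
Proof.
rewrite /gdist.
have -> : find (fun n => walkn e n x y) (iota 0 #|V|) = find (fun n => walkn e n y x) (iota 0 #|V|).
  apply: eq_find => n; apply/idP/idP; exact: walk_sym.
by [].
Qed.

Lemma gdist_tri x y z a b : gdist e x y = Some a -> gdist e y z = Some b ->
  exists2 c, gdist e x z = Some c & c <= a + b.
Proof.
move=> /gdist_walk H1 /gdist_walk H2; exact: walk_gdist (walk_cat H1 H2).
Qed.
End G.
From mathcomp Require Import lra.
Local Open Scope ring_scope.

Section Main.
Variable V : finType.
Variable e : rel V.
Hypothesis He_sym : symmetric e.
Variable R : realFieldType.
Variable f : V -> R.
Hypothesis Hf0 : forall v, 0 <= f v.
Variable C : {set V}.
Hypothesis HC : vertex_cover_B0 e f C.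

Let g := gC e f C.
Let T u v := match gdist e u v with Some d => f v - d%:R | None => 0 end.

Lemma nonC u w d : u \notin C -> w \notin C -> gdist e u w = Some d ->
  `|f u - f w| <= d%:R.
Proof.
move=> Hu Hw Hd; rewrite leNgt; apply/negP => H.
case: (ltgtP (f u) (f w)) => Hlt.
- have : B0 e f u w by rewrite /B0 /VS_pos Hd H Hlt.
  by move/HC; rewrite (negbTE Hu) (negbTE Hw).
- have : B0 e f w u by rewrite /B0 /VS_pos gdist_sym // Hd distrC H Hlt.
  by move/HC; rewrite (negbTE Hu) (negbTE Hw).
- by move: H; rewrite Hlt subrr normr0 ltNge ler0n.
Qed.

Lemma gC_in u : u \in C -> g u = \big[Num.max/0]_(v | v \notin C) T u v.
Proof. by move=> Hu; rewrite /g /gC Hu. Qed.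

Lemma gC_out u : u \notin C -> g u = f u.
Proof. by move=> Hu; rewrite /g /gC (negbTE Hu). Qed.

Lemma g_ge0 u : 0 <= g u.
Proof.
case: (boolP (u \in C)) => Hu; last by rewrite gC_out.
rewrite gC_in //; elim/big_rec: _ => // i z _ Hz.
by rewrite le_max Hz orbT.
Qed.

Lemma g_geT u v : u \in C -> v \notin C -> T u v <= g u.
Proof.
move=> Hu Hv; rewrite gC_in // (bigD1 v) //=; by rewrite le_max lexx.
Qed.

Lemma half x y d : gdist e x y = Some d -> g x <= g y + d%:R.
Proof.
move=> Hd.
have Hyx : gdist e y x = Some d by rewrite gdist_sym.
case: (boolP (x \in C)) => Hx.
  rewrite gC_in //; apply: (big_ind (fun z => z <= g y + d%:R)).
  - by apply: addr_ge0; [exact: g_ge0 | exact: ler0n].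
  - by move=> a b Ha Hb; rewrite ge_max Ha Hb.
  move=> v Hv; rewrite /T; case Ha: (gdist e x v) => [a|]; last first.
    by apply: addr_ge0; [exact: g_ge0 | exact: ler0n].
  have [c Hc Hca] := gdist_tri Hyx Ha.
  have Hca' : (c%:R : R) <= d%:R + a%:R by rewrite -natrD ler_nat.
  case: (boolP (y \in C)) => Hy.
    have := g_geT Hy Hv; rewrite /T Hc => H.
    lra.
  rewrite gC_out //.
  have Hvy : gdist e v y = Some c by rewrite gdist_sym.
  have := nonC Hv Hy Hvy => /ler_normlP [_ H2].
  lra.
rewrite gC_out //.
case: (boolP (y \in C)) => Hy.
  have := g_geT Hy Hx; rewrite /T Hyx => H.
  lra.
rewrite gC_out //.
have := nonC Hx Hy Hd => /ler_normlP [_ H2].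
lra.
Qed.

Lemma lip : lipschitz e g.
Proof.
move=> x y; case Hd: (gdist e x y) => [d|] //.
have H1 := half Hd.
have H2 : g y <= g x + d%:R by apply: half; rewrite gdist_sym.
apply/ler_normlP; split; lra.
Qed.
End Main.

Theorem claim3p2 (V : finType) (e : rel V) (He_sym : symmetric e)
  (He_irr : irreflexive e) (R : realFieldType) (r : R) (f : V -> R)
  (Hf : forall v, 0 <= f v <= r) (C : {set V})
  (HC : vertex_cover_B0 e f C) :
  lipschitz e (gC e f C).
Proof.
apply: lip => // v; by case/andP: (Hf v).
Qed.
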